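(* If a nontrivial real Banach space $X$ has the strong diameter $2$ property, then $X^*$ contains a subspace isomorphic to $\ell_1$.
   Context: A slice of the closed unit ball $B_X$ is a set $\{x\in B_X: x^*(x)>1-\alpha\}$ with $x^*\in S_{X^*}$, $\alpha>0$. $X$ has the strong diameter $2$ property if every convex combination $\sum_{i=1}^n\lambda_iS_i$ ($n\in\mathbb{N}$, $\lambda_i\geq0$, $\sum\lambda_i=1$, $S_i$ slices of $B_X$) has diameter $2$. *)

(* Defs.v *)
From HB Require Import structures.
From mathcomp Require Import all_boot all_order all_algebra.
From mathcomp Require Import all_classical all_reals all_analysis.
Set Implicit Arguments. Unset Strict Implicit. Unset Printing Implicit Defensive.
Import Order.TTheory GRing.Theory Num.Theory.
Import numFieldNormedType.Exports.
Local Open Scope classical_set_scope.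
Local Open Scope ring_scope.

Section Defs.
Variables (R : realType) (X : normedModType R).

Definition unit_ball : set X := [set x : X | `|x| <= 1].

Definition is_dual (f : X -> R) : Prop :=
  (forall (a : R) (x y : X), f (a *: x + y) = a * f x + f y) /\ continuous f.

Definition dual_norm (f : X -> R) : R := sup [set `|f x| | x in unit_ball].

Definition slice (f : X -> R) (alpha : R) : set X :=
  [set x | unit_ball x /\ f x > 1 - alpha].

Definition diam (A : set X) : R :=
  sup [set `|p.1 - p.2| | p in A `*` A].

Definition conv_comb_slices (n : nat) (lam : 'I_n -> R)
    (f : 'I_n -> X -> R) (al : 'I_n -> R) : set X :=
  [set x | exists xs : 'I_n -> X,
      (forall i, slice (f i) (al i) (xs i)) /\ x = \sum_(i < n) lam i *: xs i].

Definition strong_diameter_two : Prop :=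
  forall (n : nat) (lam : 'I_n -> R) (f : 'I_n -> X -> R) (al : 'I_n -> R),
    (forall i, 0 <= lam i) -> \sum_(i < n) lam i = 1 ->
    (forall i, is_dual (f i) /\ dual_norm (f i) = 1) ->
    (forall i, 0 < al i) ->
    diam (conv_comb_slices lam f al) = 2.

Definition in_l1 (a : nat -> R) : Prop := cvgn (series (fun k => `|a k|)).
Definition l1_norm (a : nat -> R) : R := limn (series (fun k => `|a k|)).

(* X^* contains a subspace isomorphic to ell_1: there is a linear map
   T : ell_1 -> X^* which is an isomorphism onto its range *)
Definition dual_contains_l1 : Prop :=
  exists (T : (nat -> R) -> X -> R) (c C : R),
    0 < c /\ 0 < C /\
    (forall a, in_l1 a -> is_dual (T a)) /\
    (forall (k : R) a b, in_l1 a -> in_l1 b ->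
        forall x, T (fun n => k * a n + b n) x = k * T a x + T b x) /\
    (forall a, in_l1 a ->
        c * l1_norm a <= dual_norm (T a) /\ dual_norm (T a) <= C * l1_norm a).

End Defs.

(* Main.v *)
Require Import Defs.
From HB Require Import structures.
From mathcomp Require Import all_boot all_order all_algebra.
From mathcomp Require Import all_classical all_reals all_analysis.
From mathcomp Require Import lra ring.
Set Implicit Arguments. Unset Strict Implicit. Unset Printing Implicit Defensive.
Import Order.TTheory GRing.Theory Num.Theory.
Import numFieldNormedType.Exports.
Local Open Scope classical_set_scope.
Local Open Scope ring_scope.

Section HahnBanach.
Variables (R : realType) (X : normedModType R).

Definition sublin (p : X -> R) :=
  (forall x y, p (x + y) <= p x + p y) /\ (forall c x, 0 <= c -> p (c *: x) <= c * p x).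

Lemma sublin0 p : sublin p -> p 0 = 0.
Proof.
move=> [sa sh]; apply/eqP; rewrite eq_le; apply/andP; split.
  by have := sh 0 0 (lexx _); rewrite scale0r mul0r.
by have := sa 0 0; rewrite addr0 -lerBlDl subrr.
Qed.

Lemma sublin_lb p x : sublin p -> - p (- x) <= p x.
Proof.
move=> sp; have := sp.1 x (- x); rewrite subrr sublin0 // => h; lra.
Qed.

Lemma sublinZ p c x : sublin p -> 0 <= c -> p (c *: x) = c * p x.
Proof.
move=> sp; rewrite le_eqVlt => /orP[/eqP <-|c0].
  by rewrite scale0r mul0r sublin0.
apply/eqP; rewrite eq_le; apply/andP; split; first exact: sp.2 (ltW c0).
have := sp.2 c^-1 (c *: x); rewrite invr_ge0 ltW // scalerA mulVf ?gt_eqF //.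
rewrite scale1r => /(_ isT) h.
by move: h; rewrite -(ler_pM2l c0) mulrA mulfV ?gt_eqF // mul1r.
Qed.

Definition Qf (p : X -> R) (x0 : X) (y : X) : R :=
  inf [set p (y + t *: x0) - t * p x0 | t in [set t : R | 0 <= t]].

Lemma Q_lb p x0 y t : sublin p -> 0 <= t -> - p (- y) <= p (y + t *: x0) - t * p x0.
Proof.
move=> sp t0; have := sp.1 (y + t *: x0) (- y).
rewrite addrC addKr sublinZ // => h; lra.
Qed.

Lemma Q_has_lb p x0 y : sublin p ->
  has_lbound [set p (y + t *: x0) - t * p x0 | t in [set t : R | 0 <= t]].
Proof. by move=> sp; exists (- p (- y)) => _ [t t0 <-]; exact: Q_lb. Qed.

Lemma Q_ne (p : X -> R) (x0 y : X) :
  [set p (y + t *: x0) - t * p x0 | t in [set t : R | 0 <= t]] !=set0.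
Proof. by exists (p y), 0; rewrite /= ?lexx // scale0r addr0 mul0r subr0. Qed.

Lemma Q_le p x0 y t : sublin p -> 0 <= t -> Qf p x0 y <= p (y + t *: x0) - t * p x0.
Proof. by move=> sp t0; apply: (ge_inf (Q_has_lb x0 y sp)); exists t. Qed.

Lemma Q_glb (p : X -> R) (x0 y : X) a : (forall t, 0 <= t -> a <= p (y + t *: x0) - t * p x0) ->
  a <= Qf p x0 y.
Proof. by move=> h; apply: lb_le_inf (Q_ne _ _ _) _ => _ [t t0 <-]; exact: h. Qed.

Lemma Q_lep p x0 y : sublin p -> Qf p x0 y <= p y.
Proof. by move=> sp; have := Q_le x0 y sp (lexx 0); rewrite scale0r addr0 mul0r subr0. Qed.

Lemma Q_negx p x0 : sublin p -> Qf p x0 (- x0) <= - p x0.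
Proof.
move=> sp; have := Q_le x0 (- x0) sp ler01.
by rewrite scale1r addNr sublin0 // mul1r sub0r.
Qed.

Lemma Q_sublin p x0 : sublin p -> sublin (Qf p x0).
Proof.
move=> sp; split.
  move=> y1 y2.
  suff h : forall t2, 0 <= t2 -> Qf p x0 (y1 + y2) - (p (y2 + t2 *: x0) - t2 * p x0) <= Qf p x0 y1.
    have : Qf p x0 (y1 + y2) - Qf p x0 y1 <= Qf p x0 y2.
      by apply: Q_glb => t2 t20; have := h t2 t20; lra.
    lra.
  move=> t2 t20; apply: Q_glb => t1 t10.
  have := Q_le x0 (y1 + y2) sp (addr_ge0 t10 t20).
  have := sp.1 (y1 + t1 *: x0) (y2 + t2 *: x0).
  have -> : y1 + t1 *: x0 + (y2 + t2 *: x0) = y1 + y2 + (t1 + t2) *: x0.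
    by rewrite scalerDl addrACA.
  lra.
move=> c y; rewrite le_eqVlt => /orP[/eqP <-|c0].
  by rewrite scale0r mul0r; have := Q_lep x0 0 sp; rewrite (sublin0 sp).
have key : forall t, 0 <= t -> Qf p x0 (c *: y) <= c * (p (y + t *: x0) - t * p x0).
  move=> t t0; have := Q_le x0 (c *: y) sp (mulr_ge0 (ltW c0) t0).
  by rewrite -scalerA -scalerDr (@sublinZ p c (y + t *: x0) sp (ltW c0)) mulrBr mulrA.
have : c^-1 * Qf p x0 (c *: y) <= Qf p x0 y.
  apply: Q_glb => t t0.
  by rewrite -(ler_pM2l c0) mulrA mulfV ?gt_eqF // mul1r; exact: key.
by rewrite -(ler_pM2l c0) mulrA mulfV ?gt_eqF // mul1r.
Qed.

Lemma norm_sublin : sublin (fun x : X => `|x|).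
Proof.
split; first by move=> x y; exact: ler_normD.
by move=> c x c0; rewrite normrZ ger0_norm.
Qed.

Lemma HB_norm (z : X) : exists f : X -> R,
  (forall a x y, f (a *: x + y) = a * f x + f y) /\
  (forall x, `|f x| <= `|x|) /\ f z = `|z|.
Proof.
pose N := fun x : X => `|x|.
have sN : sublin N := norm_sublin.
pose q0 := Qf N z.
have sq0 : sublin q0 := Q_sublin z sN.
have q0N x : q0 x <= N x := Q_lep z x sN.
pose T := {p : X -> R | sublin p /\ forall x, p x <= q0 x}.
pose Rl := fun s t : T => `[< forall x, sval t x <= sval s x >].
pose t0 : T := exist _ q0 (conj sq0 (fun x => lexx _)).
have [t tmax] : exists t, premaximal Rl t.
  apply: (@ZL_preorder _ t0 Rl).
  - by move=> t; apply/asboolP => x.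
  - move=> r s t /asboolP rs /asboolP st; apply/asboolP => x.
    exact: le_trans (st x) (rs x).
  move=> A Atot.
  have [[s0 As0]|nA] := pselect (exists s, A s); last first.
    by exists t0 => s As; exfalso; apply: nA; exists s.
  pose m := fun x => inf [set sval s x | s in A].
  have lbA x s : A s -> - N (- x) <= sval s x.
    move=> _; case: s => p [sp pq] /=.
    by have := sublin_lb x sp; have := pq (- x); have := q0N (- x); lra.
  have hlb x : has_lbound [set sval s x | s in A].
    by exists (- N (- x)) => _ [s As <-]; exact: lbA.
  have mle x s : A s -> m x <= sval s x.
    by move=> As; apply: (ge_inf (hlb x)); exists s.
  have mglb x a : (forall s, A s -> a <= sval s x) -> a <= m x.
    move=> h; apply: lb_le_inf; first by exists (sval s0 x), s0.
    by move=> _ [s As <-]; exact: h.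
  have ms : sublin m.
    split.
      move=> x y.
      have key : forall s1 s2, A s1 -> A s2 -> m (x + y) <= sval s1 x + sval s2 y.
        move=> s1 s2 As1 As2.
        have [/asboolP h|/asboolP h] := Atot s1 s2 As1 As2.
          have := (proj2_sig s2).1.1 x y; have := h x; have := mle (x + y) s2 As2; lra.
        have := (proj2_sig s1).1.1 x y; have := h y; have := mle (x + y) s1 As1; lra.
      have : m (x + y) - m x <= m y.
        apply: (mglb) => s2 As2.
        have : m (x + y) - sval s2 y <= m x.
          by apply: (mglb) => s1 As1; have := key s1 s2 As1 As2; lra.
        lra.
      lra.
    move=> c x; rewrite le_eqVlt => /orP[/eqP <-|c0].
      rewrite scale0r mul0r; have := mle 0 s0 As0.
      by rewrite (sublin0 (proj2_sig s0).1).
    have : c^-1 * m (c *: x) <= m x.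
      apply: (mglb) => s As.
      rewrite -(ler_pM2l c0) mulrA mulfV ?gt_eqF // mul1r.
      have := mle (c *: x) s As.
      by rewrite (@sublinZ (sval s) c x (proj2_sig s).1 (ltW c0)).
    by rewrite -(ler_pM2l c0) mulrA mulfV ?gt_eqF // mul1r.
  have mq0 x : m x <= q0 x.
    exact: le_trans (mle x s0 As0) ((proj2_sig s0).2 x).
  exists (exist _ m (conj ms mq0)) => s As; apply/asboolP => x /=.
  exact: mle.
case: t tmax => p [sp pq0] tmax.
have pN x : p (- x) = - p x.
  have sQ : sublin (Qf p x) /\ forall y, Qf p x y <= q0 y.
    by split; [exact: Q_sublin | move=> y; exact: le_trans (Q_lep x y sp) (pq0 y)].
  have := tmax (exist _ (Qf p x) sQ).
  have h1 : Rl (exist _ p (conj sp pq0)) (exist _ (Qf p x) sQ).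
    by apply/asboolP => y /=; exact: Q_lep.
  move=> /(_ h1) /asboolP /= /(_ (- x)) h2.
  have := Q_negx x sp; have := sublin_lb x sp; lra.
have padd x y : p (x + y) = p x + p y.
  have := sp.1 x y; have := sp.1 (- x) (- y).
  by rewrite -opprD !pN; lra.
have pZ a x : p (a *: x) = a * p x.
  have [a0|a0] := leP 0 a; first exact: sublinZ.
  have -> : a *: x = (- a) *: (- x) by rewrite scaleNr scalerN opprK.
  by rewrite sublinZ ?pN; [lra | | lra].
exists p; split; first by move=> a x y; rewrite padd pZ.
split.
  move=> x; rewrite ler_norml; apply/andP; split.
    by have := pq0 (- x); have := q0N (- x); rewrite pN /N normrN; lra.
  by have := pq0 x; have := q0N x; rewrite /N; lra.
apply/eqP; rewrite eq_le; apply/andP; split.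
  by have := pq0 z; have := q0N z; rewrite /N; lra.
by have := pq0 (- z); have := Q_negx z sN; rewrite pN /N; lra.
Qed.

End HahnBanach.

Section Duals.
Variables (R : realType) (X : normedModType R).

Definition islin (f : X -> R) := forall a x y, f (a *: x + y) = a * f x + f y.

Lemma lin0 f : islin f -> f 0 = 0.
Proof. by move=> fl; have := fl 1 0 0; rewrite scale1r addr0 mul1r; lra. Qed.

Lemma linZ f a x : islin f -> f (a *: x) = a * f x.
Proof. by move=> fl; have := fl a x 0; rewrite addr0 lin0 // addr0. Qed.

Lemma linD f x y : islin f -> f (x + y) = f x + f y.
Proof. by move=> fl; have := fl 1 x y; rewrite scale1r mul1r. Qed.

Lemma linN f x : islin f -> f (- x) = - f x.
Proof. by move=> fl; rewrite -scaleN1r linZ // mulN1r. Qed.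

Lemma linB f x y : islin f -> f (x - y) = f x - f y.
Proof. by move=> fl; rewrite linD // linN. Qed.

Lemma lin_cont (f : X -> R) M : 0 <= M -> islin f ->
  (forall x, `|f x| <= M * `|x|) -> continuous f.
Proof.
move=> M0 fl fb x; apply/cvgrPdist_lt => e e0.
apply/nbhs_normP; exists (e / (M + 1)) => /=.
  by apply: divr_gt0 => //; lra.
move=> y /= hy.
have M1 : 0 < M + 1 by lra.
have h1 : `|x - y| * (M + 1) < e by rewrite -ltr_pdivlMr.
have d0 : 0 <= `|x - y| by [].
rewrite -linB //; apply: le_lt_trans (fb _) _; nra.
Qed.

Lemma lin_sum (f : X -> R) n (a : 'I_n -> R) (u : 'I_n -> X) : islin f ->
  f (\sum_(i < n) a i *: u i) = \sum_(i < n) a i * f (u i).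
Proof.
move=> fl; elim: n a u => [|n IH] a u; first by rewrite !big_ord0 lin0.
by rewrite !big_ord_recr /= linD // linZ // IH.
Qed.

Lemma ball_ne (f : X -> R) : [set `|f x| | x in @unit_ball _ X] !=set0.
Proof. by exists `|f 0|, 0 => //; rewrite /unit_ball /= normr0. Qed.

Lemma dn_le (f : X -> R) M : (forall x, `|x| <= 1 -> `|f x| <= M) -> dual_norm f <= M.
Proof. by move=> h; apply: ge_sup (ball_ne f) _ => _ [x xb <-]; exact: h. Qed.

Lemma dn_ge (f : X -> R) M x : (forall x, `|x| <= 1 -> `|f x| <= M) ->
  `|x| <= 1 -> `|f x| <= dual_norm f.
Proof.
move=> h xb; apply: (ub_le_sup); last by exists x.
by exists M => _ [y yb <-]; exact: h.
Qed.

Lemma dn_scale (f : X -> R) M c : 0 < c -> (forall x, `|x| <= 1 -> `|f x| <= M) ->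
  dual_norm (fun x => f x / c) = dual_norm f / c.
Proof.
move=> c0 h; have ic : 0 < c^-1 by rewrite invr_gt0.
have hg : forall x, `|x| <= 1 -> `|f x / c| <= M / c.
  by move=> x xb; rewrite normrM (gtr0_norm ic) ler_pM2r //; exact: h.
apply/eqP; rewrite eq_le; apply/andP; split.
  apply: dn_le => x xb; rewrite normrM (gtr0_norm ic) ler_pM2r //.
  exact: dn_ge h xb.
rewrite ler_pdivrMr //; apply: dn_le => x xb.
by have := dn_ge hg xb; rewrite normrM (gtr0_norm ic) -ler_pdivlMr // invrK.
Qed.

Lemma dn_ge0 (f : X -> R) M : (forall x, `|x| <= 1 -> `|f x| <= M) -> 0 <= dual_norm f.
Proof.
move=> h; have b0 : `|0 : X| <= 1 by rewrite normr0.
exact: le_trans (normr_ge0 _) (dn_ge h b0).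
Qed.

End Duals.

Section Main.
Variables (R : realType) (X : normedModType R).

Lemma sd2_pair n (lam : 'I_n -> R) (f : 'I_n -> X -> R) (al : 'I_n -> R) (eta : R) :
  strong_diameter_two X ->
  (forall i, 0 <= lam i) -> \sum_(i < n) lam i = 1 ->
  (forall i, is_dual (f i) /\ dual_norm (f i) = 1) ->
  (forall i, 0 < al i) -> 0 < eta ->
  exists w1 w2, conv_comb_slices lam f al w1 /\ conv_comb_slices lam f al w2 /\
    2 - eta < `|w1 - w2|.
Proof.
move=> sd l0 l1 fd a0 e0; have := sd n lam f al l0 l1 fd a0; rewrite /diam.
set D := [set _ | _ in _] => hD.
have hs : has_sup D.
  apply/not_notP => nh; move: hD; rewrite sup_out // => /eqP.
  by rewrite eq_sym pnatr_eq0.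
have [e [[w1 w2] [/= A1 A2] <-]] := sup_adherent e0 hs.
by rewrite hD => h; exists w1, w2.
Qed.


Definition sg (b : bool) : R := if b then 1 else -1.
Definition Kc (n : nat) : R := (1 - (2^-1)^+n) / 4.

Lemma KcS n : Kc n.+1 = Kc n + (2^-1)^+n / 8.
Proof. by rewrite /Kc exprS; field. Qed.

Lemma Kc_le n : Kc n <= 4^-1.
Proof.
rewrite /Kc; have : 0 <= (2^-1 : R)^+n by rewrite exprn_ge0 // invr_ge0.
by move=> h; lra.
Qed.

Lemma Kc_ge0 n : 0 <= Kc n.
Proof.
rewrite /Kc; have : (2^-1 : R)^+n <= 1.
  by rewrite exprn_ile1 // ?invr_ge0 // invf_le1 // ler1n.
by move=> h; lra.
Qed.

Lemma Kc0 : Kc 0 = 0.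
Proof. by rewrite /Kc expr0 subrr mul0r. Qed.

Definition InvS n (y : nat -> X -> R) :=
  (forall i, islin (y i) /\ forall x, `|y i x| <= `|x|) /\
  forall s : nat -> bool, exists x : X, `|x| <= 1 /\
     n%:R - Kc n <= \sum_(i < n) sg (s i) * y i x.

Lemma sg_norm b (r : R) : `|sg b * r| = `|r|.
Proof. by case: b; rewrite /sg ?mul1r ?mulN1r ?normrN. Qed.


Definition StepC n (y : nat -> X -> R) (yn : X -> R) :=
  (islin yn /\ forall x, `|yn x| <= `|x|) /\
  forall s : nat -> bool, exists x : X, `|x| <= 1 /\
    n.+1%:R - Kc n.+1 <= \sum_(i < n) sg (s i) * y i x + sg (s n) * yn x.

Lemma sg2 b : sg b * sg b = 1.
Proof. by case: b; rewrite /sg ?mulr1 ?mulrNN ?mulr1. Qed.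

Lemma step0 (y : nat -> X -> R) (z : X) : z != 0 -> exists yn, StepC 0 y yn.
Proof.
move=> z0; have [f [fl [fb fz]]] := HB_norm z.
have nz : 0 < `|z| by rewrite normr_gt0.
exists f; split; first by [].
move=> s; exists (sg (s 0%N) *: (`|z|^-1 *: z)); split.
  rewrite !normrZ; have -> : `|sg (s 0%N)| = 1 by case: (s 0%N); rewrite /sg ?normrN normr1.
  by rewrite mul1r gtr0_norm ?invr_gt0 // mulVf ?gt_eqF.
rewrite big_ord0 add0r (linZ _ _ fl) (linZ _ _ fl) fz mulVf ?gt_eqF // mulr1 sg2.
by have := Kc_ge0 1; lra.
Qed.


Lemma step_pos n (y : nat -> X -> R) : strong_diameter_two X -> InvS n.+1 y ->
  exists yn, StepC n.+1 y yn.
Proof.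
move=> sd [yb yinv].
pose P := {ffun 'I_n.+1 -> bool}.
pose spat (p : P) : nat -> bool := fun i => p (inord i).
have [xp hxp] := boolp.choice (fun p : P => yinv (spat p)).
pose fp (p : P) (x : X) := \sum_(i < n.+1) sg (spat p i) * y i x.
have fp_lin p : islin (fp p).
  move=> a x x'; rewrite /fp mulr_sumr -big_split /=; apply: eq_bigr => i _.
  by rewrite (yb i).1; ring.
have n1 : (1 : R) <= n.+1%:R by rewrite ler1n.
have fp_bd p x : `|fp p x| <= n.+1%:R * `|x|.
  apply: le_trans (ler_norm_sum _ _ _) _.
  have : \sum_(i < n.+1) `|sg (spat p i) * y i x| <= \sum_(i < n.+1) `|x|.
    by apply: ler_sum => i _; rewrite sg_norm; exact: (yb i).2.
  move=> h; apply: le_trans h _; rewrite sumr_const card_ord. by rewrite mulr_natl.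
have hfb p x : `|x| <= 1 -> `|fp p x| <= n.+1%:R.
  move=> xb; apply: le_trans (fp_bd p x) _.
  by rewrite -{2}[n.+1%:R]mulr1 ler_wpM2l // ler0n.
pose Np p := dual_norm (fp p).
have Np_ge p : n.+1%:R - Kc n.+1 <= Np p.
  have [xb hx] := hxp p.
  apply: le_trans hx _; apply: le_trans (ler_norm _) _.
  exact: dn_ge (hfb p) xb.
have Np_le p : Np p <= n.+1%:R by apply: dn_le; exact: hfb.
have Np_pos p : 0 < Np p.
  by have := Np_ge p; have := Kc_le n.+1; lra.
pose gp p x := fp p x / Np p.
have gp_dual p : is_dual (gp p) /\ dual_norm (gp p) = 1.
  have ip : 0 < (Np p)^-1 by rewrite invr_gt0.
  split; last by rewrite /gp (dn_scale (Np_pos p) (hfb p)) -/(Np p) divff // gt_eqF.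
  have gl : islin (gp p) by move=> a x x'; rewrite /gp fp_lin mulrDl mulrA.
  split; first exact: gl.
  apply: (@lin_cont _ _ _ (n.+1%:R / Np p)); first by rewrite divr_ge0 ?ltW.
    exact: gl.
  move=> x; rewrite /gp normrM (gtr0_norm ip) mulrAC.
  by apply: ler_wpM2r; [rewrite invr_ge0; exact: ltW | exact: fp_bd].
have m0 : (0 < #|{: P}|)%N by apply/card_gt0P; exists [ffun=> true].
pose m := #|{: P}|.
have mR : 0 < m%:R :> R by rewrite ltr0n.
pose lam := fun i : 'I_m => (m%:R : R)^-1.
have l0 i : 0 <= lam i by rewrite invr_ge0 ler0n.
have l1 : \sum_(i < m) lam i = 1.
  by rewrite sumr_const card_ord -[LHS]mulr_natr mulVf ?gt_eqF.
pose d : R := (2^-1)^+n.+1 / 8.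
have d0 : 0 < d by rewrite divr_gt0 // exprn_gt0 // invr_gt0.
have n0 : 0 < n.+1%:R :> R by rewrite ltr0n.
pose al := fun i : 'I_m => d / (2 * n.+1%:R).
have al0 i : 0 < al i by rewrite divr_gt0 // mulr_gt0.
pose eta := d / (2 * m%:R).
have eta0 : 0 < eta by rewrite divr_gt0 // mulr_gt0.
pose fs := fun i : 'I_m => gp (enum_val i).
have [w1 [w2 [[u1 [hu1 ew1]] [[u2 [hu2 ew2]] hw]]]] :=
  @sd2_pair m lam fs al eta sd l0 l1 (fun i => gp_dual (enum_val i)) al0 eta0.
have [yn [ynl [ynb ynz]]] := HB_norm (w1 - w2).
have yn1 i : `|yn (u1 i)| <= 1 by apply: le_trans (ynb _) (hu1 i).1.
have yn2 i : `|yn (u2 i)| <= 1 by apply: le_trans (ynb _) (hu2 i).1.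
have key i : 2 - d / 2 < yn (u1 i) - yn (u2 i).
  pose dd := fun i => yn (u1 i) - yn (u2 i).
  have hsum : yn (w1 - w2) = (m%:R)^-1 * \sum_(i < m) dd i.
    rewrite ew1 ew2 (linB _ _ ynl) (lin_sum _ _ ynl) (lin_sum _ _ ynl) -sumrB mulr_sumr.
    by apply: eq_bigr => k _; rewrite /dd mulrBr.
  have hS : (2 - eta) * m%:R < \sum_(i < m) dd i.
    by rewrite -ltr_pdivlMr // mulrC -hsum ynz.
  have em : eta * m%:R = d / 2 by rewrite /eta; field; rewrite pnatr_eq0 -lt0n.
  have h2 : 2 - dd i <= \sum_(k < m) (2 - dd k).
    rewrite (bigD1 i) //= lerDl; apply: sumr_ge0 => k _.
    by rewrite /dd; have := yn1 k; have := yn2 k; rewrite !ler_norml; lra.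
  have h3 : \sum_(k < m) (2 - dd k) = 2 * m%:R - \sum_(k < m) dd k.
    by rewrite sumrB sumr_const card_ord mulr_natr.
  move: hS; rewrite mulrBl em; rewrite /dd in h2 h3 *; lra.
exists yn; split; first by [].
move=> s.
pose p : P := [ffun i : 'I_n.+1 => s i].
pose j := enum_rank p.
have ej : enum_val j = p := enum_rankK p.
exists (if s n.+1 then u1 j else u2 j); split.
  by case: (s n.+1); [exact: (hu1 j).1 | exact: (hu2 j).1].
set x := (if s n.+1 then u1 j else u2 j).
have hg : 1 - al j < gp p x.
  by rewrite -ej /x; case: (s n.+1); [exact: (hu1 j).2 | exact: (hu2 j).2].
have hfx : Np p * gp p x = fp p x by rewrite /gp mulrC divfK ?gt_eqF.
have hsum : \sum_(i < n.+1) sg (s i) * y i x = fp p x.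
  by apply: eq_bigr => i _; rewrite /spat ffunE inord_val.
have hNa : Np p * al j <= d / 2.
  apply: le_trans (ler_wpM2r (ltW (al0 j)) (Np_le p)) _.
  by rewrite /al le_eqVlt; apply/orP; left; apply/eqP; field.
have hNg : Np p * (1 - al j) < Np p * gp p x by rewrite ltr_pM2l.
have hK : Kc n.+2 = Kc n.+1 + d by rewrite KcS.
have hn : n.+2%:R = n.+1%:R + 1 :> R by rewrite -addn1 natrD.
have hNp := Np_ge p.
have hsg : 1 - d / 2 <= sg (s n.+1) * yn x.
  have := key j; have := yn1 j; have := yn2 j; rewrite !ler_norml /x.
  by case: (s n.+1); rewrite /sg ?mul1r ?mulN1r; lra.
rewrite hsum -hfx hK hn; move: hNg; rewrite mulrBr mulr1; lra.
Qed.

End Main.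
Arguments sg {R} b. Arguments Kc {R} n.

Section Build.
Variables (R : realType) (X : normedModType R).

Lemma Inv0 : InvS 0 (fun (_ : nat) (_ : X) => 0 : R).
Proof.
split.
  by move=> i; split; [move=> a x y; rewrite mulr0 addr0 | move=> x; rewrite normr0].
by move=> s; exists 0; rewrite normr0 big_ord0 Kc0 subrr.
Qed.

Lemma Inv_step n (y : nat -> X -> R) : strong_diameter_two X -> (exists z : X, z != 0) ->
  InvS n y -> exists y', InvS n.+1 y' /\ forall i, (i < n)%N -> y' i = y i.
Proof.
move=> sd [z z0] hI.
have [yn [hyn hs]] : exists yn, StepC n y yn.
  case: n hI => [|n] hI; [exact: step0 z0 | exact: step_pos sd hI].
exists (fun i => if i == n then yn else y i); split; last first.
  by move=> i lt; rewrite ltn_eqF.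
split.
  by move=> i; case: (i == n); [exact: hyn | exact: hI.1].
move=> s; have [x [xb hx]] := hs s; exists x; split => //.
rewrite big_ord_recr /= eqxx; apply: le_trans hx _; rewrite lerD2r.
by rewrite le_eqVlt; apply/orP; left; apply/eqP; apply: eq_bigr => i _; rewrite ltn_eqF.
Qed.


Lemma build : strong_diameter_two X -> (exists z : X, z != 0) ->
  exists Y : nat -> X -> R, forall n, InvS n Y.
Proof.
move=> sd nz.
have st : forall n (y : {y : nat -> X -> R | InvS n y}),
    {y' : {y : nat -> X -> R | InvS n.+1 y} | forall i, (i < n)%N -> sval y' i = sval y i}.
  move=> n [y hy]; have /boolp.cid [y' [h1 h2]] := Inv_step sd nz hy.
  by exists (exist _ y' h1).
pose F := fix F n : {y : nat -> X -> R | InvS n y} :=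
  match n with 0 => exist _ _ Inv0 | n'.+1 => sval (st n' (F n')) end.
pose Y i := sval (F i.+1) i.
have agree : forall m i, (i < m)%N -> sval (F m) i = Y i.
  elim => [//|m IH] i; rewrite ltnS leq_eqVlt => /orP[/eqP -> //|lt].
  by rewrite /= (proj2_sig (st m (F m))) // IH.
exists Y => n; have [hb hp] := proj2_sig (F n); split.
  by move=> i; exact: (proj2_sig (F i.+1)).1 i.
move=> s; have [x [xb hx]] := hp s; exists x; split => //.
by apply: le_trans hx _; rewrite le_eqVlt; apply/orP; left; apply/eqP;
  apply: eq_bigr => i _; rewrite agree.
Qed.

End Build.

Section Final.
Variables (R : realType) (X : normedModType R).

Lemma Ys_of (Y : nat -> X -> R) : (forall n, InvS n Y) ->
  forall N (s : nat -> bool), exists x : X, `|x| <= 1 /\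
    forall i, (i < N)%N -> 3 / 4 <= sg (s i) * Y i x.
Proof.
move=> hI N s; have [x [xb hx]] := (hI N).2 s; exists x; split => // i iN.
have tb k : sg (s k) * Y k x <= 1.
  apply: le_trans (ler_norm _) _; rewrite sg_norm.
  exact: le_trans (((hI N).1 k).2 x) xb.
have h1 : \sum_(k < N) (1 - sg (s k) * Y k x) <= 4^-1.
  rewrite sumrB sumr_const card_ord -mulr_natr mul1r.
  by have := @Kc_le R N; lra.
have h2 : 1 - sg (s i) * Y i x <= \sum_(k < N) (1 - sg (s k) * Y k x).
  rewrite (bigD1 (Ordinal iN)) //= lerDl; apply: sumr_ge0 => k _.
  by have := tb k; lra.
lra.
Qed.


Variables (Y : nat -> X -> R)
  (Yb : forall i, islin (Y i) /\ forall x, `|Y i x| <= `|x|).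

Definition Tm (a : nat -> R) (x : X) : R := limn (series (fun k => a k * Y k x)).

Lemma cvg_l1Z (a : nat -> R) c : in_l1 a -> cvgn (series (fun k => c * `|a k|)).
Proof.
move=> ha; have := is_cvg_seriesZ (k:=c) ha.
by congr (cvgn (series _)); apply/funext => k.
Qed.

Lemma cvg_T a x : in_l1 a -> cvgn (series (fun k => a k * Y k x)).
Proof.
move=> ha; apply: normed_cvg.
apply: (@series_le_cvg _ _ (fun k => `|x| * `|a k|)).
- by move=> n /=.
- by move=> n; rewrite mulr_ge0.
- by move=> n /=; rewrite normrM mulrC ler_wpM2r //; exact: (Yb n).2.
exact: cvg_l1Z.
Qed.


Lemma lim_lin2 (u v : nat -> R) c : cvgn u -> cvgn v ->
  limn (fun n => c * u n + v n) = c * limn u + limn v.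
Proof.
move=> cu cv; apply: cvg_lim => //.
apply: (@cvgD _ _ _ _ _ (fun n => c * u n) v); [exact: cvgMl_tmp | exact: cv].
Qed.

Lemma T_lin a : in_l1 a -> islin (Tm a).
Proof.
move=> ha c x y; rewrite /Tm.
have -> : series (fun k => a k * Y k (c *: x + y)) =
   (fun n => c * series (fun k => a k * Y k x) n + series (fun k => a k * Y k y) n).
  apply/funext => n; rewrite /series /= mulr_sumr -big_split /=.
  by apply: eq_bigr => k _; rewrite (Yb k).1; ring.
by rewrite lim_lin2 //; exact: cvg_T.
Qed.


Lemma T_lina k (a b : nat -> R) (x : X) : in_l1 a -> in_l1 b ->
  Tm (fun n => k * a n + b n) x = k * Tm a x + Tm b x.
Proof.
move=> ha hb; rewrite /Tm.
have -> : series (fun n => (k * a n + b n) * Y n x) =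
   (fun n => k * series (fun j => a j * Y j x) n + series (fun j => b j * Y j x) n).
  apply/funext => n; rewrite /series /= mulr_sumr -big_split /=.
  by apply: eq_bigr => j _; ring.
by rewrite lim_lin2 //; exact: cvg_T.
Qed.

Lemma S_nd (a : nat -> R) : nondecreasing_seq (series (fun k => `|a k|)).
Proof.
move=> m n mn; rewrite /series /= (big_cat_nat _ mn) //= lerDl.
by apply: sumr_ge0 => k _.
Qed.

Lemma S_le (a : nat -> R) n : in_l1 a -> series (fun k => `|a k|) n <= l1_norm a.
Proof. by move=> ha; exact: nondecreasing_cvgn_le (S_nd a) ha n. Qed.

Lemma L_ge0 (a : nat -> R) : in_l1 a -> 0 <= l1_norm a.
Proof.
move=> ha; apply: le_trans (S_le 0 ha); rewrite /series /=.
by rewrite big_geq.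
Qed.

Lemma part_bd (a : nat -> R) (x : X) n :
  `|series (fun k => a k * Y k x) n| <= series (fun k => `|a k|) n * `|x|.
Proof.
rewrite /series /= mulr_suml; apply: le_trans (ler_norm_sum _ _ _) _.
by apply: ler_sum => k _; rewrite normrM ler_wpM2l //; exact: (Yb k).2.
Qed.

Lemma T_bd (a : nat -> R) (x : X) : in_l1 a -> `|Tm a x| <= l1_norm a * `|x|.
Proof.
move=> ha; have cT := cvg_T (x:=x) ha.
have h n : `|series (fun k => a k * Y k x) n| <= l1_norm a * `|x|.
  apply: le_trans (part_bd a x n) _; apply: ler_wpM2r => //; exact: S_le.
rewrite ler_norml; apply/andP; split.
  apply: limr_ge cT _; apply: nearW => n.
  by have := h n; rewrite ler_norml => /andP[].
apply: limr_le cT _; apply: nearW => n.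
by have := h n; rewrite ler_norml => /andP[].
Qed.


Lemma T_lower (a : nat -> R) :
  (forall N (s : nat -> bool), exists x : X, `|x| <= 1 /\
    forall i, (i < N)%N -> 3 / 4 <= sg (s i) * Y i x) ->
  in_l1 a -> 2^-1 * l1_norm a <= dual_norm (Tm a).
Proof.
move=> Ys ha.
have L0 := L_ge0 ha.
have hb x : `|x| <= 1 -> `|Tm a x| <= l1_norm a.
  move=> xb; apply: le_trans (T_bd x ha) _.
  by rewrite -{2}[l1_norm a]mulr1 ler_wpM2l.
have dn0 := dn_ge0 hb.
have [Lle0|Lgt0] := leP (l1_norm a) 0; first lra.
pose S := series (fun k => `|a k|).
have [N hN] : exists N, 6 / 7 * l1_norm a <= S N.
  apply: contrapT => /forallNP h.
  have : l1_norm a <= 6 / 7 * l1_norm a.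
    apply: limr_le ha _; apply: nearW => n.
    by have := h n; move/negP; rewrite -ltNge => /ltW.
  lra.
pose s := fun k => (0 <= a k)%R.
have [x [xb hx]] := Ys N s.
pose f := fun k => a k * Y k x.
have low1 : 3 / 4 * S N <= series f N.
  rewrite /S /series /= mulr_sumr !big_mkord; apply: ler_sum => k _.
  have := hx k (ltn_ord k); rewrite /s /f /sg.
  case: (leP 0 (a k)) => ak.
    by rewrite mul1r ger0_norm //; nra.
  by rewrite mulN1r ltr0_norm //; nra.
have low2 : series f N - (l1_norm a - S N) <= Tm a x.
  apply: limr_ge (cvg_T (x:=x) ha) _.
  apply: (filterS _ (nbhs_infty_ge N)) => n hn /=.
  have hSn : S n <= l1_norm a := S_le n ha.
  have tail : `|\sum_(N <= k < n) f k| <= \sum_(N <= k < n) `|a k|.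
    apply: le_trans (ler_norm_sum _ _ _) _; apply: ler_sum => k _.
    rewrite /f normrM; apply: le_trans (ler_wpM2l (normr_ge0 _) ((Yb k).2 x)) _.
    by rewrite -{2}[`|a k|]mulr1 ler_wpM2l.
  move: hSn; rewrite /S /series /= (big_cat_nat (leq0n N) hn) /=.
  rewrite (big_cat_nat (leq0n N) hn) /=.
  by move: tail; rewrite ler_norml => /andP[t1 _]; lra.
apply: le_trans (dn_ge hb xb); apply: le_trans (ler_norm _).
lra.
Qed.

End Final.


Unset Implicit Arguments.
Local Close Scope classical_set_scope.

Theorem corollary3p7 (R : realType) (X : completeNormedModType R) :
  (exists x : X, x != 0) -> strong_diameter_two X -> dual_contains_l1 X.
Proof.
move=> nz sd.
have [Y hI] := build sd nz.
have Yb := (hI 0%N).1.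
have Ys := Ys_of hI.
exists (Tm Y), 2^-1, 1; split; first lra.
split; first lra.
split.
  move=> a ha; split; first exact: T_lin.
  apply: (@lin_cont _ _ _ (l1_norm a)); first exact: L_ge0.
    exact: T_lin.
  by move=> x; exact: T_bd.
split.
  by move=> k a b ha hb x; exact: T_lina.
move=> a ha; split; first exact: T_lower.
rewrite mul1r; apply: dn_le => x xb; apply: le_trans (T_bd Yb x ha) _.
by rewrite -{2}[l1_norm a]mulr1 ler_wpM2l // L_ge0.
Qed.
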